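(* Let $x$ be a random input with true label $Y$, taking labels in a finite set. Let $S^A_y(x)$ and $S^B_y(x)$ be two real-valued class-score functions, with predictions $\hat y_A(x)=\arg\max_y S^A_y(x)$ and $\hat y_B(x)=\arg\max_y S^B_y(x)$. Define $\Delta_A(x)=S^A_{\hat y_A(x)}(x)-\max_{y\neq\hat y_A(x)}S^A_y(x)$ and $E(x)=\max_y|S^A_y(x)-S^B_y(x)|$. Then for every $t\ge 0$, $$\Pr[\hat y_A(x)\ne\hat y_B(x)]\le\Pr[\Delta_A(x)\le 2t]+\Pr[E(x)>t],$$ and consequently, with $\mathrm{Acc}(A)=\Pr[\hat y_A(x)=Y]$ and $\mathrm{Acc}(B)=\Pr[\hat y_B(x)=Y]$, $$|\mathrm{Acc}(A)-\mathrm{Acc}(B)|\le\Pr[\hat y_A(x)\ne\hat y_B(x)]\le\Pr[\Delta_A(x)\le 2t]+\Pr[E(x)>t].$$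
   Context: The scores $S^A_y,S^B_y$ are cumulative class scores of two classifiers (sums of per-block goodness values); predictions are given by argmax over labels. *)

(* Defs.v *)
From HB Require Import structures.
From mathcomp Require Import all_boot all_order all_algebra.
From mathcomp Require Import all_classical all_reals all_analysis.
Set Implicit Arguments. Unset Strict Implicit. Unset Printing Implicit Defensive.
Import Order.TTheory GRing.Theory Num.Theory.
Local Open Scope ring_scope.

(* Prediction: an arg max over labels of the class scores; ties are broken
   deterministically (via the enumeration of L, starting from default y0). *)
Definition predict (R : realType) (T : Type) (L : finType) (y0 : L)
  (S : L -> T -> R) (x : T) : L :=
  Order.arg_max y0 xpredT (fun y => S y x).

(* Margin Delta(x) = S_{yhat}(x) - max_{y <> yhat} S_y(x), in \bar R
   (max over the empty set is -oo, so Delta = +oo when there is one label). *)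
Definition margin (R : realType) (T : Type) (L : finType) (y0 : L)
  (S : L -> T -> R) (x : T) : \bar R :=
  let yh := predict y0 S x in
  ((S yh x)%:E - \big[maxe/-oo%E]_(y | y != yh) (S y x)%:E)%E.

Definition score_gap (R : realType) (T : Type) (L : finType)
  (SA SB : L -> T -> R) (x : T) : R :=
  \big[Num.max/0]_(y : L) `|SA y x - SB y x|.

(* Main.v *)
Require Import Defs.
From HB Require Import structures.
From mathcomp Require Import all_boot all_order all_algebra.
From mathcomp Require Import all_classical all_reals all_analysis.
From mathcomp Require Import measurable_realfun.
From mathcomp Require Import lra.
Import Order.TTheory GRing.Theory Num.Theory.
Local Open Scope classical_set_scope.
Local Open Scope ring_scope.

Section Helpers.
Context (d : measure_display) (T : measurableType d).

Lemma mexists (V : finType) (f : V -> T -> bool) :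
  (forall v, measurable_fun setT (f v)) ->
  measurable_fun setT (fun x => [exists v, f v x]).
Proof.
move=> mf.
have -> : (fun x => [exists v, f v x]) =
          (fun x => \big[orb/false]_(v <- enum V) f v x).
  apply: funext => x; rewrite big_has.
  by apply/existsP/hasP => [[v H]|[v _ H]]; exists v => //; rewrite mem_enum.
elim: (enum V) => [|v r IH].
  under eq_fun do rewrite big_nil.
  exact: measurable_cst.
under eq_fun do rewrite big_cons.
exact: measurable_or.
Qed.

Lemma mforall (V : finType) (f : V -> T -> bool) :
  (forall v, measurable_fun setT (f v)) ->
  measurable_fun setT (fun x => [forall v, f v x]).
Proof.
move=> mf.
have -> : (fun x => [forall v, f v x]) =
          (fun x => ~~ [exists v, ~~ f v x]).
  apply: funext => x; rewrite negb_exists.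
  by apply: eq_forallb => v; rewrite negbK.
by apply: measurable_neg; apply: mexists => v; apply: measurable_neg.
Qed.

Lemma mset (P : T -> Prop) (f : T -> bool) :
  (forall x, P x <-> f x) -> measurable_fun setT f -> measurable [set x | P x].
Proof.
move=> H mf.
have -> : [set x | P x] = setT `&` f @^-1` [set true].
  by apply/seteqP; split => x /=; [move/H => ->| case=> _ /H].
exact: mf.
Qed.

Context (R : realType) (L : finType) (y0 : L).

Lemma mpred (S : L -> T -> R) (a : L) :
  (forall y, measurable_fun setT (S y)) ->
  measurable_fun setT (fun x => predict y0 S x == a).
Proof.
move=> mS.
pose cf x := [ffun p : L * L => S p.1 x <= S p.2 x].
pose G (c : {ffun L * L -> bool}) := odflt y0 [pick i | [forall j, c (j, i)]].
have E : forall x, predict y0 S x = G (cf x).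
  move=> x; rewrite /predict /Order.arg_max /extremum /G; congr odflt.
  apply: eq_pick => i /=; apply: eq_forallb => j; by rewrite ffunE.
have -> : (fun x => predict y0 S x == a) =
          (fun x => [exists c, (cf x == c) && (G c == a)]).
  apply: funext => x; rewrite E.
  by apply/idP/existsP => [H|[c /andP[/eqP -> H]]]; [exists (cf x); rewrite eqxx|].
apply: mexists => c; apply: measurable_and; last exact: measurable_cst.
have -> : (fun x => cf x == c) =
          (fun x => [forall p, (S p.1 x <= S p.2 x) == c p]).
  apply: funext => x; apply/eqP/forallP => [<- p|H].
    by rewrite ffunE.
  by apply/ffunP => p; rewrite ffunE; exact/eqP.
apply: mforall => p; case: (c p).
  under eq_fun do rewrite eqb_id.
  exact: measurable_fun_ler.
under eq_fun do rewrite eqbF_neg.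
exact/measurable_neg/measurable_fun_ler.
Qed.

Lemma predict_max (S : L -> T -> R) x j : S j x <= S (predict y0 S x) x.
Proof.
rewrite /predict; case: arg_maxP => // i _ H; exact: H.
Qed.

Lemma margin_le (S : L -> T -> R) x (r : R) :
  (margin y0 S x <= r%:E)%E =
  [exists y, (y != predict y0 S x) && (S (predict y0 S x) x - S y x <= r)].
Proof.
rewrite /margin; set a := predict y0 S x.
set Mx := (\big[maxe/-oo]_(y | y != a) (S y x)%:E)%E.
apply/idP/existsP.
  move=> H; apply/existsP; apply: contraLR H => /existsPn Hn.
  have Hlt : (Mx < (S a x - r)%:E)%E.
    apply/bigmax_ltP; split; first by rewrite ltNyr.
    move=> y ya.
    move: (Hn y); rewrite ya /= -ltNge => h.
    rewrite lte_fin; lra.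
  move: Hlt; case: Mx => [m| |] //=.
    rewrite lte_fin => h; rewrite -EFinB lee_fin -ltNge; lra.
move=> [y /andP[ya h]].
have Hle : ((S y x)%:E <= Mx)%E by exact: le_bigmax_cond.
move: Hle; case: Mx => [m| |] //=.
  rewrite lee_fin => h2; rewrite -EFinB lee_fin; lra.
by move=> _; rewrite addeNy leNye.
Qed.

Lemma gap_lt (SA SB : L -> T -> R) x (t : R) : 0 <= t ->
  (t < score_gap SA SB x) = [exists y, t < `|SA y x - SB y x|].
Proof.
move=> t0; rewrite /score_gap ltNge; apply/idP/idP.
  move=> H; apply: contraNT H => /existsPn Hn; apply/bigmax_leP; split => // y _.
  by rewrite leNgt; exact: Hn.
move=> /existsP [y Hy]; apply/negP => /bigmax_leP [_ /(_ y isT)].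
by rewrite leNgt Hy.
Qed.

End Helpers.

Lemma absdiff_le (R : realType) (a b c : R) :
  a <= b + c -> b <= a + c -> `|a - b| <= c.
Proof. by move=> h1 h2; rewrite ler_norml; apply/andP; split; lra. Qed.

Theorem proposition2 (d : measure_display) (T : measurableType d)
  (R : realType) (P : probability T R) (L : finType) (y0 : L)
  (Y : T -> L) (SA SB : L -> T -> R)
  (mY : forall y : L, measurable (Y @^-1` [set y]))
  (mSA : forall y : L, measurable_fun setT (SA y))
  (mSB : forall y : L, measurable_fun setT (SB y))
  (t : R) (t0 : 0 <= t) :
  let yA := predict y0 SA in
  let yB := predict y0 SB in
  let accA := P [set x | yA x = Y x] in
  let accB := P [set x | yB x = Y x] in
  let dis := P [set x | yA x <> yB x] in
  let bound := (P [set x | (margin y0 SA x <= (2 * t)%R%:E)%E]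
                + P [set x | (t < score_gap SA SB x)%R])%E in
  (dis <= bound)%E /\ (`| accA - accB | <= dis)%E /\ (`| accA - accB | <= bound)%E.
Proof.
move=> yA yB accA accB dis bound.
have mYb : forall a, measurable_fun setT (fun x => Y x == a).
  move=> a; apply: (measurable_fun_bool true); rewrite setTI.
  have -> : (fun x => Y x == a) @^-1` [set true] = Y @^-1` [set a].
    by apply/seteqP; split => x /= /eqP.
  exact: mY.
have mA : measurable [set x | yA x = Y x].
  apply: (@mset _ _ _ (fun x => [exists a, (yA x == a) && (Y x == a)])).
    move=> x; split => [->|/existsP [a /andP[/eqP -> /eqP ->]]] //.
    by apply/existsP; exists (Y x); rewrite eqxx.
  by apply: mexists => a; apply: measurable_and; [exact: mpred|exact: mYb].
have mB : measurable [set x | yB x = Y x].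
  apply: (@mset _ _ _ (fun x => [exists a, (yB x == a) && (Y x == a)])).
    move=> x; split => [->|/existsP [a /andP[/eqP -> /eqP ->]]] //.
    by apply/existsP; exists (Y x); rewrite eqxx.
  by apply: mexists => a; apply: measurable_and; [exact: mpred|exact: mYb].
have mD : measurable [set x | yA x <> yB x].
  apply: (@mset _ _ _ (fun x => ~~ [exists a, (yA x == a) && (yB x == a)])).
    move=> x; split.
      move=> H; apply/existsPn => a; apply/negP => /andP[/eqP h1 /eqP h2].
      by apply: H; rewrite h1 h2.
    move=> /existsPn H E; move: (H (yA x)); by rewrite E eqxx.
  by apply: measurable_neg; apply: mexists => a; apply: measurable_and; exact: mpred.
have mM : measurable [set x | (margin y0 SA x <= (2 * t)%R%:E)%E].
  apply: (@mset _ _ _ (fun x => [exists a, (yA x == a) &&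
            [exists y, (y != a) && (SA a x - SA y x <= 2 * t)]])).
    move=> x; rewrite margin_le; split.
      by move=> H; apply/existsP; exists (yA x); rewrite eqxx.
    by move=> /existsP [a /andP[/eqP <- H]].
  apply: mexists => a; apply: measurable_and; first exact: mpred.
  apply: mexists => y; apply: measurable_and; first exact: measurable_cst.
  apply: measurable_fun_ler; last exact: measurable_cst.
  exact: measurable_funB.
have mG : measurable [set x | (t < score_gap SA SB x)%R].
  apply: (@mset _ _ _ (fun x => [exists y, t < `|SA y x - SB y x|])).
    by move=> x; rewrite gap_lt.
  apply: mexists => y; apply: measurable_fun_ltr; first exact: measurable_cst.
  apply: measurableT_comp; first exact: normr_measurable.
  exact: measurable_funB.
have h1 : (dis <= bound)%E.
  apply: le_trans; last exact: measureU2.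
  apply: le_measure; rewrite ?inE //; first exact: measurableU.
  move=> x /= Hx.
  case: (boolP (t < score_gap SA SB x)) => Hg; [by right|left].
  rewrite margin_le; apply/existsP; exists (yB x).
  rewrite eq_sym; apply/andP; split; first exact/eqP.
  have HB := @predict_max _ _ _ _ y0 SB x (yA x).
  rewrite -/(yB x) in HB.
  have ga := le_bigmax 0 (fun y => `|SA y x - SB y x|) (yA x).
  have gb := le_bigmax 0 (fun y => `|SA y x - SB y x|) (yB x).
  rewrite -leNgt in Hg.
  have {}ga := le_trans ga Hg; have {}gb := le_trans gb Hg.
  move: ga gb; rewrite !ler_norml => /andP[a1 a2] /andP[b1 b2].
  rewrite -/(yA x); lra.
have hAB : (accA <= accB + dis)%E.
  apply: le_trans; last exact: measureU2.
  apply: le_measure; rewrite ?inE //; first exact: measurableU.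
  move=> x /= Hx; case: (eqVneq (yB x) (Y x)) => h; [by left|right].
  by rewrite Hx; apply/eqP; rewrite eq_sym.
have hBA : (accB <= accA + dis)%E.
  apply: le_trans; last exact: measureU2.
  apply: le_measure; rewrite ?inE //; first exact: measurableU.
  move=> x /= Hx; case: (eqVneq (yA x) (Y x)) => h; [by left|right].
  by rewrite Hx; apply/eqP.
have h2 : (`| accA - accB | <= dis)%E.
  have [a fA] : exists a, accA = a%:E.
    by exists (fine accA); rewrite fineK // fin_num_measure.
  have [b fB] : exists b, accB = b%:E.
    by exists (fine accB); rewrite fineK // fin_num_measure.
  have [c fD] : exists c, dis = c%:E.
    by exists (fine dis); rewrite fineK // fin_num_measure.
  move: hAB hBA; rewrite fA fB fD -!EFinD abse_EFin !lee_fin.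
  exact: absdiff_le.

split => //; split => //; exact: le_trans h2 h1.
Qed.
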